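(* Let $C$ be a binary linear $[n,k]$ code whose hull $\mathrm{Hull}(C)=C\cap C^{\perp}$ has dimension $\ell$, where $0\le\ell\le k$. Let $G$ be a $k\times n$ generator matrix of $C$ with rows $\mathbf r_1,\dots,\mathbf r_k$ and $H$ an $(n-k)\times n$ parity check matrix of $C$ with rows $\mathbf s_1,\dots,\mathbf s_{n-k}$. Suppose $\mathbf x=(x_1,\dots,x_n)\in\mathbb F_2^n$ satisfies $\mathbf x\cdot\mathbf x=0$. Put $y_i=\mathbf x\cdot\mathbf r_i$ ($1\le i\le k$) and $z_j=\mathbf x\cdot\mathbf s_j$ ($1\le j\le n-k$). Then the matrix \[ G_3=\begin{bmatrix} 1 & 0 & x_1\ \cdots\ x_n\\ y_1 & y_1 & \mathbf r_1\\ \vdots & \vdots & \vdots\\ y_k & y_k & \mathbf r_k\end{bmatrix} \] generates a binary linear $[n+2,k+1]$ code $C_3$ whose hull has dimension $\ell$, and the matrix \[ H_3=\begin{bmatrix} 0 & 1 & x_1\ \cdots\ x_n\\ z_1 & z_1 & \mathbf s_1\\ \vdots & \vdots & \vdots\\ z_{n-k} & z_{n-k} & \mathbf s_{n-k}\end{bmatrix} \] is a parity check matrix for $C_3$.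
   Context: All codes are binary linear codes; the dual is taken with respect to the standard dot product on $\mathbb F_2^n$, and $\mathrm{Hull}(C)=C\cap C^{\perp}$. A parity check matrix of $C$ is a generator matrix of $C^{\perp}$. The code $C_3$ is called Construction IV. *)

(* Defs.v *)
From HB Require Import structures.
From mathcomp Require Import all_boot all_order all_algebra.
Set Implicit Arguments. Unset Strict Implicit. Unset Printing Implicit Defensive.
Import GRing.Theory.
Local Open Scope ring_scope.

(* Binary codes are represented by (row spaces of) matrices over 'F_2.
   A code of length n is the row space of a matrix with n columns. *)

(* Dual code (standard dot product): all u with u . r = 0 for every row r
   of A, i.e. u *m A^T = 0. kermx (A^T) is a square matrix whose row space
   is exactly that set. *)
Definition dualmx (m n : nat) (A : 'M['F_2]_(m, n)) : 'M['F_2]_n := kermx A^T.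

Definition hull_dim (m n : nat) (A : 'M['F_2]_(m, n)) : nat :=
  \rank (A :&: dualmx A)%MS.

Definition G3mx (k n : nat) (G : 'M['F_2]_(k, n)) (x : 'rV['F_2]_n)
  : 'M['F_2]_(1 + k, (1 + 1) + n) :=
  let y : 'cV['F_2]_k := G *m x^T in
  col_mx (row_mx (row_mx (const_mx 1) (const_mx 0)) x)
         (row_mx (row_mx y y) G).

Definition H3mx (r n : nat) (H : 'M['F_2]_(r, n)) (x : 'rV['F_2]_n)
  : 'M['F_2]_(1 + r, (1 + 1) + n) :=
  let z : 'cV['F_2]_r := H *m x^T in
  col_mx (row_mx (row_mx (const_mx 0) (const_mx 1)) x)
         (row_mx (row_mx z z) H).

(* Main.v *)
Require Import Defs.
From HB Require Import structures.
From mathcomp Require Import all_boot all_order all_algebra.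
Import GRing.Theory.
Local Open Scope ring_scope.
Set Implicit Arguments. Unset Strict Implicit.

Lemma addmx_xx2 (m n : nat) (A : 'M['F_2]_(m, n)) : A + A = 0.
Proof. apply/matrixP => i j; rewrite !mxE; rewrite -mulr2n -mulr_natr.
have ->: (2 : 'F_2) = 0 by apply/eqP.
by rewrite mulr0. Qed.

Lemma const11 : const_mx 1 = 1%:M :> 'M['F_2]_1.
Proof. by apply/matrixP => i j; rewrite !ord1 !mxE. Qed.

Lemma const01 : const_mx 0 = 0 :> 'M['F_2]_1.
Proof. by apply/matrixP => i j; rewrite !ord1 !mxE. Qed.

Definition Mx n (x : 'rV['F_2]_n) : 'M['F_2]_(n, (1 + 1) + n) :=
  row_mx (row_mx x^T x^T) 1%:M.
Definition ax n (x : 'rV['F_2]_n) : 'rV['F_2]_((1 + 1) + n) :=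
  row_mx (row_mx (const_mx 1) (const_mx 0)) x.
Definition cx n (x : 'rV['F_2]_n) : 'rV['F_2]_((1 + 1) + n) :=
  row_mx (row_mx (const_mx 0) (const_mx 1)) x.

Lemma trMx n (x : 'rV['F_2]_n) : (Mx x)^T = col_mx (col_mx x x) 1%:M.
Proof. by rewrite /Mx !tr_row_mx trmxK trmx1. Qed.

Lemma MMt n (x : 'rV['F_2]_n) : Mx x *m (Mx x)^T = 1%:M.
Proof. by rewrite trMx /Mx !mul_row_col addmx_xx2 add0r mul1mx. Qed.

Lemma aat n (x : 'rV['F_2]_n) : x *m x^T = 0 -> ax x *m (ax x)^T = 1%:M.
Proof.
move=> xx; rewrite /ax !tr_row_mx !mul_row_col xx addr0 const11 const01.
by rewrite tr_scalar_mx mulmx1 mul0mx addr0.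
Qed.

Lemma cct n (x : 'rV['F_2]_n) : x *m x^T = 0 -> cx x *m (cx x)^T = 1%:M.
Proof.
move=> xx; rewrite /cx !tr_row_mx !mul_row_col xx addr0 const11 const01.
by rewrite tr_scalar_mx mulmx1 mul0mx add0r.
Qed.

Lemma aMt n (x : 'rV['F_2]_n) : ax x *m (Mx x)^T = 0.
Proof.
by rewrite trMx /ax !mul_row_col const11 const01 mul1mx mul0mx addr0 mulmx1 addmx_xx2.
Qed.

Lemma cMt n (x : 'rV['F_2]_n) : cx x *m (Mx x)^T = 0.
Proof.
by rewrite trMx /cx !mul_row_col const11 const01 mul1mx mul0mx add0r mulmx1 addmx_xx2.
Qed.

Lemma cat n (x : 'rV['F_2]_n) : x *m x^T = 0 -> cx x *m (ax x)^T = 0.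
Proof.
move=> xx; rewrite /cx /ax !tr_row_mx !mul_row_col xx const01 mul0mx.
by rewrite trmx0 mulmx0 !addr0.
Qed.

Lemma G3E k n (G : 'M['F_2]_(k, n)) x : G3mx G x = col_mx (ax x) (G *m Mx x).
Proof. by rewrite /G3mx /Mx !mul_mx_row mulmx1. Qed.

Lemma H3E k n (G : 'M['F_2]_(k, n)) x : H3mx G x = col_mx (cx x) (G *m Mx x).
Proof. by rewrite /H3mx /Mx !mul_mx_row mulmx1. Qed.

Lemma free_of_inj m N (A : 'M['F_2]_(m, N)) :
  (forall u : 'rV_m, u *m A = 0 -> u = 0) -> row_free A.
Proof.
move=> H; rewrite -kermx_eq0; apply/eqP/row_matrixP => i.
by rewrite row0; apply: H; rewrite -row_mul mulmx_ker row0.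
Qed.

Lemma Mat_tr n N (a : 'rV['F_2]_N) (M : 'M['F_2]_(n, N)) :
  a *m M^T = 0 -> M *m a^T = 0.
Proof. by move=> h; rewrite -[M]trmxK -trmx_mul h trmx0. Qed.

Lemma rank_ext m n N (A : 'M['F_2]_(m, n)) (M : 'M['F_2]_(n, N)) (a : 'rV_N) :
  row_free A -> M *m M^T = 1%:M -> a *m a^T = 1%:M -> a *m M^T = 0 ->
  \rank (col_mx a (A *m M)) = (1 + m)%N.
Proof.
move=> fA MM aa aM; apply/eqP; apply: free_of_inj => u.
rewrite -[u]hsubmxK mul_row_col => h.
have hp : lsubmx u = 0.
  have := congr1 (mulmx^~ (a^T)) h.
  by rewrite mul0mx mulmxDl -!mulmxA aa (Mat_tr aM) !mulmx0 mulmx1 addr0.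
move: h; rewrite hp mul0mx add0r => h.
have hd : rsubmx u *m A = 0.
  have := congr1 (mulmx^~ (M^T)) h.
  by rewrite mul0mx -!mulmxA MM mulmx1.
move/eqP: hd; rewrite mulmx_free_eq0 // => /eqP ->.
by rewrite row_mx0.
Qed.

Lemma sub_col_r m1 m2 N (A : 'M['F_2]_(m1, N)) (B : 'M['F_2]_(m2, N)) :
  (B <= col_mx A B)%MS.
Proof. by rewrite -addsmxE addsmxSr. Qed.

Lemma hull_eq k n (G : 'M['F_2]_(k, n)) x : x *m x^T = 0 ->
  (col_mx (ax x) (G *m Mx x) :&: kermx (col_mx (ax x) (G *m Mx x))^T
     == (G :&: kermx G^T) *m Mx x)%MS.
Proof.
move=> xx.
have aa := aat xx; have aM := aMt x; have MM := MMt x.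
move: aa aM MM; set M := Mx x; set a := ax x => aa aM MM.
have Gt : (col_mx a (G *m M))^T = row_mx a^T (M^T *m G^T)
  by rewrite tr_col_mx trmx_mul.
apply/andP; split.
- set W := (_ :&: _)%MS.
  have [D hD] := submxP (capmxSl _ _ : (W <= col_mx a (G *m M))%MS).
  have hW : W *m (col_mx a (G *m M))^T = 0 by apply/eqP; rewrite -sub_kermx capmxSr.
  move/eqP: hW; rewrite Gt mul_mx_row row_mx_eq0 => /andP[/eqP h1 /eqP h2].
  rewrite hD -[D]hsubmxK mul_row_col in h1 h2 *.
  have hp : lsubmx D = 0.
    by move: h1; rewrite mulmxDl -!mulmxA aa (Mat_tr aM) !mulmx0 mulmx1 addr0.
  rewrite hp mul0mx add0r in h2 *.
  rewrite mulmxA; apply: submxMr; rewrite sub_capmx submxMl /= sub_kermx.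
  by move: h2; rewrite !mulmxA -(mulmxA _ M) MM mulmx1 => ->.
- rewrite sub_capmx; apply/andP; split.
    apply: submx_trans (sub_col_r a (G *m M)).
    by apply: submxMr; apply: capmxSl.
  rewrite sub_kermx Gt mul_mx_row -mulmxA (Mat_tr aM) mulmx0.
  rewrite mulmxA -(mulmxA _ M) MM mulmx1.
  have : ((G :&: kermx G^T) <= kermx G^T)%MS by apply: capmxSr.
  rewrite sub_kermx => /eqP ->; by rewrite row_mx0.
Qed.

Theorem theorem3 (n k l : nat) (G : 'M['F_2]_(k, n)) (H : 'M['F_2]_(n - k, n))
  (x : 'rV['F_2]_n) :
  (k <= n)%N -> (l <= k)%N ->
  \rank G = k ->                      (* G generates an [n,k] code C *)
  \rank H = (n - k)%N ->
  (H == dualmx G)%MS ->               (* H is a parity check matrix of C *)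
  hull_dim G = l ->                   (* dim Hull(C) = l *)
  x *m x^T = 0 ->                     (* x . x = 0 *)
  [/\ \rank (G3mx G x) = k.+1,        (* C3 is an [n+2,k+1] code *)
      hull_dim (G3mx G x) = l,
      \rank (H3mx H x) = (n - k).+1 &
      (H3mx H x == dualmx (G3mx G x))%MS].
Proof.
move=> kn lk rG rH HG hG xx.
have fG : row_free G by rewrite /row_free rG.
have fH : row_free H by rewrite /row_free rH.
have MM := MMt x.
have rG3 : \rank (G3mx G x) = k.+1.
  by rewrite G3E rank_ext // ?aat ?aMt.
have rH3 : \rank (H3mx H x) = (n - k).+1.
  by rewrite H3E rank_ext // ?cct ?cMt.
have HGt : H *m G^T = 0.
  by apply/eqP; rewrite -sub_kermx; case/andP: HG.
have ortho : H3mx H x *m (G3mx G x)^T = 0.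
  rewrite G3E H3E tr_col_mx trmx_mul mul_mx_row !mul_col_mx (cat xx).
  rewrite -(mulmxA H) (Mat_tr (aMt x)) mulmx0 col_mx0.
  rewrite !mulmxA (cMt x) mul0mx -(mulmxA H) MM mulmx1 HGt col_mx0.
  by rewrite row_mx0.
have sub : (H3mx H x <= dualmx (G3mx G x))%MS by rewrite /dualmx sub_kermx ortho.
have rD : \rank (dualmx (G3mx G x)) = ((1 + 1 + n) - k.+1)%N.
  by rewrite /dualmx mxrank_ker mxrank_tr rG3.
split => //.
- have fM : row_free (Mx x) by apply/row_freeP; exists (Mx x)^T.
  rewrite /hull_dim /dualmx G3E (eqmx_rank (hull_eq G xx)) mxrankMfree // -hG.
- apply/andP; split => //.
  rewrite -(mxrank_leqif_sup sub).2 rH3 rD.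
  apply/eqP; rewrite !add1n subSS subSn //.
Qed.
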